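(* Let $r=2$ and let $U$ be an $\mathbb{F}_q$-subspace of $\mathbb{F}_{q^n}^2$ with $\dim_{\mathbb{F}_q}U=n$, with determinantal polynomial $F_U(x,y)$. Then the number of zeros of $F_U$ in $\mathrm{PG}(1,q^n)$, counted with multiplicity, equals $\deg F_U=1+q+\dots+q^{n-1}$; i.e. all roots of $F_U$ lie in $\mathrm{PG}(1,q^n)$ ($F_U$ is a product of linear forms over $\mathbb{F}_{q^n}$).
   Context: $q$ a prime power, $n\ge2$. For an $\mathbb{F}_q$-subspace $U$ of $\mathbb{F}_{q^n}^2$, $L_U=\{\langle u\rangle_{\mathbb{F}_{q^n}}:u\in U\setminus\{0\}\}$. Determinantal polynomial: for $u=(u_0,u_1)$ let $\hat u=(u_0,u_1,u_0^q,u_1^q,\dots,u_0^{q^{n-1}},u_1^{q^{n-1}})\in\mathbb{F}_{q^n}^{2n}$; with an $\mathbb{F}_q$-basis $u_1,\dots,u_n$ of $U$, $F_U(x,y)$ is the determinant of the $2n\times 2n$ matrix whose first $n$ rows are $\hat u_1,\dots,\hat u_n$ and whose remaining rows are, for $i=0,\dots,n-1$, the vector with $x^{q^i},y^{q^i}$ in positions $2i,2i+1$ and zeros elsewhere. Its zeros in $\mathrm{PG}(1,q^n)$ are the points of $L_U$. *)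

(* Defs.v *)
From HB Require Import structures.
From mathcomp Require Import all_boot all_order all_algebra all_field.
From mathcomp Require Import mpoly.
Set Implicit Arguments. Unset Strict Implicit. Unset Printing Implicit Defensive.
Import GRing.Theory.
Local Open Scope ring_scope.

(* Bivariate polynomials in x = 'X_0 and y = 'X_1 over L. *)

(* The determinantal polynomial F_U(x,y) attached to the F_q-basis
   u_0,...,u_{n-1} of U (u k = (u_0, u_1) in L^2).  The 2n x 2n matrix has
   rows 0..n-1 equal to hat(u_k) = (u0, u1, u0^q, u1^q, ..., u0^{q^{n-1}}, u1^{q^{n-1}})
   and row n+i equal to the vector with x^{q^i}, y^{q^i} in columns 2i, 2i+1. *)
Definition detpoly (L : fieldType) (q n : nat) (u : 'I_n -> L * L)
  : {mpoly L[2]} :=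
  \det (\matrix_(r < n + n, c < n + n)
    (let i := (c %/ 2)%N in
     let e := (c %% 2)%N in
     match split r with
     | inl k => ((if e == 0%N then (u k).1 else (u k).2) ^+ (q ^ i))%:MP
     | inr k => if i == val k then ('X_(inord e) : {mpoly L[2]}) ^+ (q ^ i) else 0
     end)).

(* u_0,...,u_{n-1} are linearly independent over F_q = {c in L | c^q = c}. *)
Definition Fq_independent (L : fieldType) (q n : nat) (u : 'I_n -> L * L) :=
  forall c : 'I_n -> L, (forall i, c i ^+ q = c i) ->
    \sum_(i < n) c i * (u i).1 = 0 -> \sum_(i < n) c i * (u i).2 = 0 ->
    forall i, c i = 0.

(* Main.v *)
Require Import Defs.
From HB Require Import structures.
From mathcomp Require Import all_boot all_order all_algebra all_field.
From mathcomp Require Import mpoly.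
From mathcomp Require Import ring zify perm.
Import GRing.Theory.
Local Open Scope ring_scope.
Set Implicit Arguments. Unset Strict Implicit.

Lemma pnat_pchar (R : nzRingType) (p m : nat) : p \in [pchar R] -> [pchar R].-nat (p ^ m)%N.
Proof.
move=> hp; rewrite pnatX; apply/orP; left.
by rewrite (eq_pnat _ (pcharf_eq hp)) pnat_id // (pcharf_prime hp).
Qed.

Lemma frobD (R : comNzRingType) (p m : nat) (x y : R) : p \in [pchar R] ->
  (x + y) ^+ (p ^ m)%N = x ^+ (p ^ m)%N + y ^+ (p ^ m)%N.
Proof. by move=> hp; rewrite exprDn_pchar // pnat_pchar. Qed.

Lemma frobN (R : comNzRingType) (p m : nat) (x : R) : p \in [pchar R] ->
  (- x) ^+ (p ^ m)%N = - x ^+ (p ^ m)%N.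
Proof.
move=> hp; apply/eqP; rewrite -subr_eq0 opprK -frobD // addNr expr0n.
by rewrite expn_eq0 -[p == 0%N]negbK -lt0n prime_gt0 ?(pcharf_prime hp).
Qed.

Lemma frobB (R : comNzRingType) (p m : nat) (x y : R) : p \in [pchar R] ->
  (x - y) ^+ (p ^ m)%N = x ^+ (p ^ m)%N - y ^+ (p ^ m)%N.
Proof. by move=> hp; rewrite frobD // frobN. Qed.

Definition Moore (R : comNzRingType) (q m : nat) (g : 'I_m -> R) :=
  \det (\matrix_(i < m, j < m) g j ^+ (q ^ i)).

Lemma sum_delta (R : comNzRingType) m (i : 'I_m) (F : 'I_m -> R) :
  \sum_l (i == l)%:R * F l = F i.
Proof.
rewrite (bigD1 i) //= eqxx mul1r big1 ?addr0 // => l /negbTE.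
by rewrite eq_sym => ->; rewrite mul0r.
Qed.

Lemma sum_delta1 (R : comNzRingType) m (i : 'I_m.+1) (F : 'I_m.+1 -> R) :
  \sum_l (val i == (val l).+1)%:R * F l =
    if val i is i'.+1 then F (inord i') else 0.
Proof.
case: i => [[|i'] hi] /=.
  by rewrite big1 // => l _; rewrite mul0r.
rewrite (bigD1 (inord i')) //= inordK; last by rewrite -ltnS ltnW.
rewrite eqxx mul1r big1 ?addr0 // => l hl.
case: eqP => [[e]|]; last by rewrite mul0r.
by case/eqP: hl; apply: val_inj; rewrite /= inordK ?e // -e ltnW.
Qed.

Section MooreStep.
Variables (R : comNzRingType) (p k : nat).
Hypothesis hp : p \in [pchar R].
Let q := (p ^ k)%N.

Lemma q_gt0 : (0 < q)%N.
Proof. by rewrite expn_gt0 prime_gt0 ?(pcharf_prime hp). Qed.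

Lemma Moore_step m (g : 'I_m.+1 -> R) :
  Moore q g = g ord0 * Moore q (fun j => g (lift ord0 j) ^+ q - g ord0 ^+ q.-1 * g (lift ord0 j)).
Proof.
set V := \matrix_(i < m.+1, j < m.+1) g j ^+ (q ^ i).
pose c (i : nat) := g ord0 ^+ (q.-1 * q ^ i.-1).
pose E := \matrix_(i < m.+1, l < m.+1) ((i == l)%:R - (val i == (val l).+1)%:R * c i).
have dE : \det E = 1.
  rewrite det_trig; last first.
    apply/forallP=> i; apply/forallP=> j; apply/implyP=> lt.
    rewrite mxE; have -> : (i == j) = false by apply/negbTE; rewrite neq_ltn lt.
    have -> : (val i == (val j).+1) = false.
      by apply/negbTE; rewrite neq_ltn ltnS (ltnW lt).
    by rewrite mul0r subr0.
  apply: big1 => i _; rewrite mxE eqxx.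
  have -> : (val i == (val i).+1) = false by apply/negbTE; rewrite neq_ltn ltnSn.
  by rewrite mul0r subr0.
have NE : forall i j, (E *m V) i j =
    if val i is i'.+1 then g j ^+ (q ^ i) - c i * g j ^+ (q ^ i') else g j.
  move=> i j; rewrite mxE.
  under eq_bigr do rewrite mxE mulrBl -mulrA.
  rewrite sumrB sum_delta sum_delta1 mxE.
  case: i => [[|i'] hi] /=; first by rewrite subr0 expn0 expr1.
  by rewrite mxE inordK // ltnW.
rewrite /Moore -/V -[\det V]mul1r -dE -det_mulmx (expand_det_col _ ord0).
rewrite big_ord_recl big1 ?addr0; last first.
  move=> i _; have hl : \val (lift ord0 i) = i.+1 by [].
  rewrite NE hl /c /= -exprD.
  have -> : (q.-1 * q ^ i + q ^ i = q ^ i.+1)%N.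
    by rewrite -{2}[(q ^ i)%N]mul1n -mulnDl addn1 prednK ?q_gt0 // expnS.
  by rewrite subrr mul0r.
rewrite NE /=; congr (_ * _).
rewrite /cofactor /= addn0 expr0 mul1r; congr (\det _).
apply/matrixP=> i j; rewrite [RHS]mxE [LHS]mxE [LHS]mxE NE.
have hl : \val (lift ord0 i) = i.+1 by [].
rewrite hl lift0 /c /= /q -[((p ^ k) ^ i)%N]expnM (frobB _ _ _ hp) exprMn -!exprM.
by rewrite expnS expnM.
Qed.
End MooreStep.

Lemma Fq_exists (L : finFieldType) (p k n : nat) :
  prime p -> (0 < k)%N -> #|L| = ((p ^ k) ^ n)%N ->
  exists s : seq L, [/\ size s = (p ^ k)%N, (forall c, c \in s -> c ^+ (p ^ k) = c) &
    \prod_(c <- s) ('X - c%:P) = 'X^(p ^ k) - 'X].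
Proof.
move=> pp k0 cL.
have hp : p \in [pchar L] by apply: (@card_finPcharP _ _ (k * n)) => //; rewrite expnM.
have hpP : p \in [pchar {poly L}] by rewrite (rmorph_pchar polyC).
have q2 : (2 <= p ^ k)%N.
  by apply: (leq_trans (prime_gt1 pp)); rewrite -{1}(expn1 p) leq_exp2l // prime_gt1.
have dv : forall j, ('X^(p ^ k) - 'X : {poly L}) %| 'X^((p ^ k) ^ j) - 'X.
  elim=> [|j IH]; first by rewrite expn0 expr1 subrr dvdp0.
  have -> : ('X^((p ^ k) ^ j.+1) - 'X : {poly L}) =
      ('X^((p ^ k) ^ j) - 'X) ^+ (p ^ k) + ('X^(p ^ k) - 'X).
    by rewrite frobB // -exprM -expnSr addrA subrK.
  by rewrite dvdp_add ?dvdpp // dvdp_exp // expn_gt0 prime_gt0.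
have mon : ('X^(p ^ k) - 'X : {poly L}) \is monic.
  rewrite monicE lead_coefDl ?lead_coefXn // size_polyXn size_polyN size_polyX.
  by rewrite ltnS.
have := dv n; rewrite -cL finField_genPoly -big_enum /=.
move=> /dvdp_prod_XsubC [m hm].
exists (mask m (enum L)).
have e : \prod_(c <- mask m (enum L)) ('X - c%:P) = 'X^(p ^ k) - 'X.
  by apply/esym/eqP; rewrite -eqp_monic // monic_prod_XsubC.
split=> //.
- have := size_prod_XsubC (mask m (enum L)) id; rewrite e.
  rewrite size_polyDl ?size_polyXn ?size_polyN ?size_polyX ?ltnS //.
  by case.
- move=> c hc; have : root ('X^(p ^ k) - 'X) c by rewrite -e root_prod_XsubC.
  by rewrite rootE !hornerE subr_eq0 => /eqP.
Qed.


Section Hom.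
Variables (L : fieldType) (R : comNzRingType) (f : {rmorphism L -> R}) (t a : R).

Definition H N (p : {poly L}) := \sum_(i < N.+1) f p`_i * t ^+ i * a ^+ (N - i).

Lemma HB N (p r : {poly L}) : H N (p - r) = H N p - H N r.
Proof.
rewrite /H -sumrB; apply: eq_bigr => i _.
by rewrite coefB rmorphB /= !mulrBl.
Qed.

Lemma HC N c (p : {poly L}) : H N (c%:P * p) = f c * H N p.
Proof.
rewrite /H mulr_sumr; apply: eq_bigr => i _.
by rewrite coefCM rmorphM /= !mulrA.
Qed.

Lemma HX N (p : {poly L}) : (size p <= N.+1)%N -> H N.+1 ('X * p) = t * H N p.
Proof.
move=> sp; rewrite /H big_ord_recl coefXM /= rmorph0 !mul0r add0r mulr_sumr.
apply: eq_bigr => i _; rewrite coefXM /= subSS exprS.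
by rewrite [t * _]mulrC !mulrA [_ * t]mulrC !mulrA.
Qed.

Lemma HS N (p : {poly L}) : (size p <= N.+1)%N -> H N.+1 p = a * H N p.
Proof.
move=> sp; rewrite /H big_ord_recr /= nth_default // rmorph0 !mul0r addr0.
rewrite mulr_sumr; apply: eq_bigr => i _ /=.
have -> : (N.+1 - i = (N - i).+1)%N by rewrite subSn // -ltnS.
by rewrite exprS; ring.
Qed.

Lemma Hprod (s : seq L) :
  H (size s) (\prod_(c <- s) ('X - c%:P)) = \prod_(c <- s) (t - f c * a).
Proof.
elim: s => [|c s IH].
  by rewrite !big_nil /H big_ord1 coef1 /= rmorph1 !mul1r.
rewrite !big_cons /= mulrBl HB HX ?HC ?HS ?IH ?size_prod_XsubC //.
by ring.
Qed.

Lemma HXn N j : (j <= N)%N -> H N 'X^j = t ^+ j * a ^+ (N - j).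
Proof.
move=> jN; rewrite /H (bigD1 (@Ordinal N.+1 j (jN : (j < N.+1)%N))) //= coefXn eqxx.
rewrite rmorph1 mul1r big1 ?addr0 // => i /eqP ne.
rewrite coefXn; case: eqP => [e|]; last by rewrite rmorph0 !mul0r.
by case: ne; apply: val_inj.
Qed.

Lemma HX1 N : (1 <= N)%N -> H N 'X = t * a ^+ N.-1.
Proof. by move=> h; rewrite -['X]expr1 HXn // expr1 subn1. Qed.

Lemma Fq_prod (s : seq L) q : (2 <= q)%N ->
  \prod_(c <- s) ('X - c%:P) = 'X^q - 'X -> size s = q ->
  \prod_(c <- s) (t - f c * a) = t ^+ q - t * a ^+ q.-1.
Proof.
move=> q2 e sz; rewrite -Hprod e sz HB HXn // subnn expr0 mulr1 HX1 //.
by apply: leq_trans q2.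
Qed.
End Hom.


Section Key.
Variables (L : fieldType) (R : comNzRingType) (f : {rmorphism L -> R}) (p k : nat).
Hypothesis hpR : p \in [pchar R].
Hypothesis hpL : p \in [pchar L].
Let q := (p ^ k)%N.
Variable Fq : seq L.
Hypothesis q2 : (2 <= q)%N.
Hypothesis Fq_size : size Fq = q.
Hypothesis Fq_fix : forall c, c \in Fq -> c ^+ q = c.
Hypothesis Fq_poly : \prod_(c <- Fq) ('X - c%:P) = 'X^q - 'X.

Definition vadd (v w : L * L) := (v.1 + w.1, v.2 + w.2).
Definition vsc (c : L) (v : L * L) := (c * v.1, c * v.2).

Definition linq (phi : L * L -> R) :=
  (forall v w, phi (vadd v w) = phi v + phi w) /\
  (forall c v, c ^+ q = c -> phi (vsc c v) = f c * phi v).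

Definition spanz m (w : 'I_m -> L * L) (v : L * L) :=
  exists a : 'I_m -> L, [/\ forall j, a j ^+ q = a j, exists j, a j != 0 &
    v = (\sum_j a j * (w j).1, \sum_j a j * (w j).2)].

Lemma sum_delta' m (i : 'I_m) (F : 'I_m -> L) :
  \sum_l (l == i)%:R * F l = F i.
Proof.
rewrite (bigD1 i) //= eqxx mul1r big1 ?addr0 // => l /negbTE ->.
by rewrite mul0r.
Qed.

Lemma spanz_step m (w : 'I_m.+1 -> L * L) v c :
  (- c) ^+ q = - c -> spanz (fun j => w (lift ord0 j)) v ->
  spanz w (vadd v (vsc (- c) (w ord0))).
Proof.
move=> hc [a [ha [j0 hj0] ->]].
exists (fun j => if unlift ord0 j is Some j' then a j' else - c); split.
- by move=> j; case: unliftP => [j' _|_]; [apply: ha | apply: hc].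
- by exists (lift ord0 j0); rewrite liftK.
rewrite /vadd /vsc !big_ord_recl unlift_none.
by congr (_, _); rewrite addrC; congr (_ + _); apply: eq_bigr => i _; rewrite liftK.
Qed.
Lemma key m : forall (phi : L * L -> R) (w : 'I_m -> L * L), linq phi ->
  exists s : seq (L * L), [/\ size s = (\sum_(i < m) q ^ i)%N,
     forall v, v \in s -> spanz w v &
     Moore q (fun j => phi (w j)) = \prod_(v <- s) phi v].
Proof.
elim: m => [|m IH] phi w [P1 P2].
  exists [::]; split => //; first by rewrite big_ord0.
  by rewrite big_nil /Moore det_mx00.
pose w0 := w ord0.
pose psi v := phi v ^+ q - phi w0 ^+ q.-1 * phi v.
have lpsi : linq psi.
  split=> [v v'|c v hc]; rewrite /psi ?P1 ?(P2 _ _ hc).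
    by rewrite (frobD _ _ _ hpR); ring.
  by rewrite exprMn -rmorphXn hc; ring.
have [s' [ss' sp' e']] := IH psi (fun j => w (lift ord0 j)) lpsi.
have hneg : forall c, c \in Fq -> (- c) ^+ q = - c.
  by move=> c hc; rewrite (frobN _ _ hpL) Fq_fix.
exists (w0 :: [seq vadd v (vsc (- c) w0) | v <- s', c <- Fq]); split.
- rewrite /= size_allpairs ss' Fq_size big_ord_recl expn0 add1n; congr _.+1.
  by rewrite big_distrl /=; apply: eq_bigr => i _; rewrite expnSr.
- move=> v; rewrite inE => /orP [/eqP ->|/allpairsP [[v1 c] [h1 h2 ->]]].
    exists (fun j => (j == ord0)%:R); split.
    + move=> j; case: (j == ord0); rewrite /= ?mulr1n ?mulr0n ?expr1n //.
      by rewrite expr0n; case: (q) q2.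
    + by exists ord0; rewrite eqxx oner_neq0.
    + rewrite !sum_delta' /w0; by case: (w ord0).
  exact: (spanz_step (hneg c h2) (sp' v1 h1)).
- rewrite big_cons (@Moore_step _ _ _ hpR); congr (_ * _).
  rewrite big_allpairs_dep e'; apply: eq_bigr => v _.
  transitivity (\prod_(c <- Fq) (phi v - f c * phi w0)).
    by rewrite (@Fq_prod L R f (phi v) (phi w0) Fq q) // /psi; ring.
  apply: eq_big_seq => c hc; rewrite P1 (P2 _ _ (hneg c hc)) rmorphN.
  ring.
Qed.
End Key.


Lemma sum2 (R : comNzRingType) m (a b : 'I_m) (F : 'I_m -> R) : a != b ->
  (forall l, l != a -> l != b -> F l = 0) -> \sum_l F l = F a + F b.
Proof.
move=> ab h; rewrite (bigD1 a) //= (bigD1 b) 1?eq_sym //= big1 ?addr0 //.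
by move=> l /andP [lb la]; apply: h.
Qed.

Lemma sum1 (R : comNzRingType) m (a : 'I_m) (F : 'I_m -> R) :
  (forall l, l != a -> F l = 0) -> \sum_l F l = F a.
Proof.
move=> h; rewrite (bigD1 a) //= big1 ?addr0 // => l la; apply: h.
Qed.

Lemma mpolyX_neq0 (L : fieldType) (i : 'I_2) : ('X_i : {mpoly L[2]}) != 0.
Proof.
apply/eqP => h; have := mcoeffXU L i i; rewrite h mcoeff0 eqxx => /esym/eqP.
by rewrite oner_eq0.
Qed.

Definition phiU (L : fieldType) (w : L * L) : {mpoly L[2]} :=
  (w.1)%:MP * 'X_(inord 1) - (w.2)%:MP * 'X_(inord 0).

Lemma split_l m1 m2 (i : 'I_m1) : split (lshift m2 i) = inl i.
Proof. exact: (unsplitK (inl i)). Qed.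
Lemma split_r m1 m2 (i : 'I_m2) : split (rshift m1 i) = inr i.
Proof. exact: (unsplitK (inr i)). Qed.

Section DetMoore.
Variables (L : fieldType) (p k n : nat) (u : 'I_n -> L * L).
Hypothesis hp : p \in [pchar L].
Let q := (p ^ k)%N.
Let R := {mpoly L[2]}.
Let x : R := 'X_(inord 0).
Let y : R := 'X_(inord 1).

Lemma hpR : p \in [pchar R].
Proof. by rewrite (rmorph_pchar (@mpolyC 2 L)). Qed.

Definition ev (i : 'I_n) : 'I_(n + n) := @Ordinal (n + n) (2 * i) ltac:(by case: i => /= i hi; lia).
Definition od (i : 'I_n) : 'I_(n + n) := @Ordinal (n + n) (2 * i).+1 ltac:(by case: i => /= i hi; lia).

Lemma ev_div i : (ev i %/ 2 = i)%N. Proof. by rewrite /= mulKn. Qed.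
Lemma ev_mod i : (ev i %% 2 = 0)%N. Proof. by rewrite /= modnMr. Qed.
Lemma od_div i : (od i %/ 2 = i)%N. Proof. by rewrite /=; lia. Qed.
Lemma od_mod i : (od i %% 2 = 1)%N. Proof. by rewrite /=; lia. Qed.

Definition sig_fun (c : 'I_(n + n)) := match split c with inl i => ev i | inr i => od i end.
Lemma sig_inj : injective sig_fun.
Proof.
move=> a b; rewrite /sig_fun.
case: splitP => i hi; case: splitP => j hj /(congr1 val) /= e; apply: val_inj;
  rewrite /= hi hj; lia.
Qed.
Definition sigp := perm sig_inj.

Definition Mmx : 'M[R]_(n + n) := \matrix_(r < n + n, c < n + n)
    (let i := (c %/ 2)%N in
     let e := (c %% 2)%N in
     match split r with
     | inl k => ((if e == 0%N then (u k).1 else (u k).2) ^+ (q ^ i))%:MP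
     | inr k => if i == val k then ('X_(inord e) : {mpoly L[2]}) ^+ (q ^ i) else 0
     end).

Lemma detpolyE : detpoly q u = \det Mmx.
Proof. by []. Qed.


Definition Pmx : 'M[R]_(n + n) := \matrix_(l, c)
  (if l == c then (if (c %% 2 == 0)%N then y ^+ (q ^ (c %/ 2)) else 1)
   else if (val l == (val c).+1) && (c %% 2 == 0)%N then - x ^+ (q ^ (c %/ 2)) else 0).

Lemma ev_od_neq i : ev i != od i.
Proof. by apply/eqP => /(congr1 val) /=; lia. Qed.

Lemma sigE_l i : sigp (lshift n i) = ev i.
Proof. by rewrite permE /sig_fun split_l. Qed.
Lemma sigE_r i : sigp (rshift n i) = od i.
Proof. by rewrite permE /sig_fun split_r. Qed.

Lemma detP : \det Pmx = \prod_(i < n) y ^+ (q ^ i).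
Proof.
rewrite det_trig; last first.
  apply/forallP=> l; apply/forallP=> c; apply/implyP=> lt; rewrite mxE.
  have -> : (l == c) = false by apply/negbTE; rewrite neq_ltn lt.
  by have -> : (val l == (val c).+1) = false by apply/negbTE; rewrite neq_ltn ltnS (ltnW lt).
rewrite (reindex_inj (@perm_inj _ sigp)) /= big_split_ord /=.
under eq_bigr do rewrite sigE_l mxE eqxx ev_mod ev_div /=.
under [X in _ * X]eq_bigr do rewrite sigE_r mxE eqxx od_mod /=.
by rewrite big1_eq mulr1.
Qed.

Lemma NE_ev r i : (Mmx *m Pmx) r (ev i) = Mmx r (ev i) * y ^+ (q ^ i) - Mmx r (od i) * x ^+ (q ^ i).
Proof.
rewrite mxE (sum2 (ev_od_neq i)).
  rewrite [Pmx (ev i) _]mxE [Pmx (od i) _]mxE eqxx ev_mod ev_div /=.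
  rewrite eq_sym (negbTE (ev_od_neq i)) eqxx /=.
  by rewrite mulrN.
move=> l h1 h2; rewrite [Pmx _ _]mxE (negbTE h1).
case: ifP => [/andP [/eqP e _]|_]; last by rewrite mulr0.
by case/eqP: h2; apply: val_inj; rewrite e.
Qed.

Lemma NE_od r i : (Mmx *m Pmx) r (od i) = Mmx r (od i).
Proof.
rewrite mxE (sum1 (a := od i)).
  by rewrite [Pmx _ _]mxE eqxx od_mod /= mulr1.
move=> l h1; rewrite [Pmx _ _]mxE (negbTE h1) od_mod andbF mulr0 //.
Qed.

Lemma Mtop_ev kk i : Mmx (lshift n kk) (ev i) = ((u kk).1 ^+ (q ^ i))%:MP.
Proof. by rewrite mxE split_l ev_mod ev_div. Qed.
Lemma Mtop_od kk i : Mmx (lshift n kk) (od i) = ((u kk).2 ^+ (q ^ i))%:MP.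
Proof. by rewrite mxE split_l od_mod od_div. Qed.
Lemma Mbot_ev j i : Mmx (rshift n j) (ev i) = if i == j then x ^+ (q ^ i) else 0.
Proof. by rewrite mxE split_r ev_mod ev_div. Qed.
Lemma Mbot_od j i : Mmx (rshift n j) (od i) = if i == j then y ^+ (q ^ i) else 0.
Proof. by rewrite mxE split_r od_mod od_div. Qed.

Definition Gmx : 'M[R]_n := \matrix_(kk, i) phiU (u kk) ^+ (q ^ i).
Definition Tmx : 'M[R]_n := \matrix_(kk, i) ((u kk).2 ^+ (q ^ i))%:MP.
Definition Dmx : 'M[R]_n := \matrix_(j, i) (if i == j then y ^+ (q ^ i) else 0).

Lemma blockE : col_perm sigp (Mmx *m Pmx) = block_mx Gmx Tmx 0 Dmx.
Proof.
apply/matrixP=> r c; rewrite mxE -[r]splitK -[c]splitK.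
case: (split r) => a; case: (split c) => b /=.
- rewrite block_mxEul sigE_l NE_ev !Mtop_ev Mtop_od mxE /phiU -/x -/y.
  by rewrite /q -expnM (frobB _ _ _ hpR) !exprMn !rmorphXn.
- by rewrite block_mxEur sigE_r NE_od Mtop_od mxE.
- rewrite block_mxEdl sigE_l NE_ev Mbot_ev Mbot_od mxE.
  by case: (b == a); rewrite ?mul0r ?subrr // mulrC subrr.
- by rewrite block_mxEdr sigE_r NE_od Mbot_od mxE.
Qed.

Lemma detD : \det Dmx = \prod_(i < n) y ^+ (q ^ i).
Proof.
rewrite det_trig; last first.
  apply/forallP=> j; apply/forallP=> i; apply/implyP=> lt; rewrite mxE.
  by have -> : (i == j) = false by apply/negbTE; rewrite neq_ltn lt orbT.
by apply: eq_bigr => i _; rewrite mxE eqxx.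
Qed.

Lemma detpoly_Moore :
  detpoly q u = (-1) ^+ (sigp^-1)%g * Moore q (fun j => phiU (u j)).
Proof.
have dy0 : \prod_(i < n) y ^+ (q ^ i) != 0.
  by apply/prodf_neq0 => i _; rewrite expf_neq0 // mpolyX_neq0.
have := congr1 determinant blockE.
rewrite det_ublock col_permE !det_mulmx det_perm detP detD.
rewrite -mulrA [_ * (-1) ^+ _]mulrC mulrA => e0.
have e : \det Mmx * (-1) ^+ (sigp^-1)%g = \det Gmx.
  by apply: (mulIf dy0); rewrite e0 mulrC.
rewrite /Moore -det_tr detpolyE.
have -> : (\matrix_(i, j) phiU (u j) ^+ (q ^ i))^T = Gmx.
  by apply/matrixP => a b; rewrite !mxE.
by rewrite -e mulrCA -expr2 sqrr_sign mulr1.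
Qed.

End DetMoore.

Unset Implicit Arguments.
Theorem mainTheorem3 (L : finFieldType) (p k n : nat) (u : 'I_n -> L * L) :
  prime p -> (0 < k)%N -> (2 <= n)%N ->
  #|L| = ((p ^ k) ^ n)%N ->
  Fq_independent (p ^ k) u ->
  exists (c : L) (s : seq (L * L)),
    [/\ c != 0,
        size s = (\sum_(i < n) (p ^ k) ^ i)%N,
        all (fun ab => ab != (0, 0)) s &
        detpoly (p ^ k) u =
          c%:MP * \prod_(ab <- s) (ab.2%:MP * 'X_0 - ab.1%:MP * 'X_1)].
Proof.
move=> pp k0 n2 cL ind.
have hpL : p \in [pchar L].
  by apply: (@card_finPcharP _ _ (k * n)) => //; rewrite expnM.
have hpR : p \in [pchar {mpoly L[2]}] by rewrite (rmorph_pchar (@mpolyC 2 L)).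
have q2 : (2 <= p ^ k)%N.
  by apply: (leq_trans (prime_gt1 pp)); rewrite -{1}(expn1 p) leq_exp2l // prime_gt1.
have [Fq [Fs Ff Fp]] := Fq_exists pp k0 cL.
have lin : linq (@mpolyC 2 L) p k (@phiU L).
  split.
    by move=> v w; rewrite /phiU /vadd /= !rmorphD /=; ring.
  by move=> c v _; rewrite /phiU /vsc /= !rmorphM /=; ring.
have [s [ss sps em]] := key hpR hpL q2 Fs Ff Fp u lin.
have i0 : (inord 0 : 'I_2) = 0 by apply: val_inj; rewrite /= inordK.
have i1 : (inord 1 : 'I_2) = 1 by apply: val_inj; rewrite /= inordK.
exists ((-1) ^+ (sigp k n hpL)^-1%g), [seq (- v.1, - v.2) | v <- s]; split.
- by rewrite signr_eq0.
- by rewrite size_map ss.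
- apply/allP => ab /mapP [v hv ->]; apply/negP => /eqP [h1 h2].
  have [a [ha [j hj] ev]] := sps v hv.
  move: h1 h2; rewrite ev /= => /eqP; rewrite oppr_eq0 => /eqP h1 /eqP.
  rewrite oppr_eq0 => /eqP h2.
  by move: hj; rewrite (ind a ha h1 h2 j) eqxx.
- rewrite (detpoly_Moore k u hpL) em rmorph_sign big_map; congr (_ * _).
  apply: eq_bigr => v _; rewrite /phiU /= !rmorphN i0 i1.
  by rewrite mulNr mulNr opprK addrC.
Qed.
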